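(* Let $(X,\mathcal{A},\mu)$ be a probability space, $\theta$ a measure-preserving endomorphism of it, $\varphi$ a ceiling function, and $(\overline{X},\overline{\mu},(\Phi_t)_{t\ge 0})$ the special flow with base transformation $\theta$ and ceiling function $\varphi$. Let $\overline{A},\overline{B}\subset\overline{X}$ be holes. Then (each relation being asserted whenever the escape rates appearing in it exist): (1) If $\overline{A}\subset\overline{B}$, then $\rho(\overline{A},\varphi)\le\rho(\overline{B},\varphi)$. (2) For all $r\ge 0$, $\rho(\overline{A},\varphi)=\rho(\Phi_r^{-1}(\overline{A}),\varphi)$. (3) For all $r\ge 0$, $\rho(\overline{A},\varphi)=\rho\big(\bigcup_{\tau\in[0,r]}\Phi_\tau^{-1}(\overline{A}),\varphi\big)$. (4) If $\varphi$ is bounded and $\pi_1(\overline{A})$ is measurable, then $\rho(\pi_1^{-1}(\pi_1(\overline{A})),\varphi)=\rho(\overline{A},\varphi)$.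
   Context: A ceiling function is a measurable $\varphi:X\to\mathbb{R}$ with $\inf_{x\in X}\varphi(x)>0$. Write $S_n\varphi=\sum_{k=0}^{n-1}\varphi\circ\theta^k$ and $N_t^\varphi(x)=\min\{n\in\mathbb{N}_0: S_n\varphi(x)>t\}$ for $t\ge0$. The special flow: $\overline{X}=\{(x,s)\in X\times\mathbb{R}:0\le s<\varphi(x)\}$ with the restriction $\overline{\mu}$ of the product of $\mu$ with Lebesgue measure, and $\Phi_t(x,s)=(x,s+t)$ if $0\le t<\varphi(x)-s$, and $\Phi_t(x,s)=(\theta^{N-1}x,\,s+t-S_{N-1}\varphi(x))$ with $N=N^\varphi_{s+t}(x)$ if $t\ge\varphi(x)-s$. $\pi_1:\overline{X}\to X$ is the projection to the first coordinate. A hole is a measurable $\overline{A}\subset\overline{X}$ with $\bigcup_{t\ge0}\Phi_t^{-1}(\overline{A})=\overline{X}$ up to a $\overline{\mu}$-null set and such that $\bigcup_{t\in[0,\tau]}\Phi_t^{-1}(\overline{A})$ is measurable for every $\tau\ge0$. The upper/lower escape rates are $\limsup_{t\to\infty}$ resp. $\liminf_{t\to\infty}$ of $-\frac1t\log\overline{\mu}(\{(x,s)\in\overline{X}:\forall\tau\in[0,t]:\Phi_\tau(x,s)\notin\overline{A}\})$; if they coincide, the common value is the escape rate $\rho(\overline{A},\varphi)$. *)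

(* Defs.v *)
From HB Require Import structures.
From mathcomp Require Import all_boot all_order all_algebra.
From mathcomp Require Import all_classical all_reals all_analysis.
Set Implicit Arguments. Unset Strict Implicit. Unset Printing Implicit Defensive.
Import Order.TTheory GRing.Theory Num.Theory.
Import numFieldNormedType.Exports.
Local Open Scope classical_set_scope.
Local Open Scope ring_scope.

Section SpecialFlow.
Context {R : realType} {d : measure_display} {X : measurableType d}.
Implicit Types (theta : X -> X) (phi : X -> R).

Definition ceiling_function phi : Prop :=
  measurable_fun setT phi /\ 0 < inf (range phi).

Definition measure_preserving (mu : set X -> \bar R) theta : Prop :=
  measurable_fun setT theta /\
  forall A, measurable A -> mu (theta @^-1` A) = mu A.

Definition Ssum theta phi (n : nat) (x : X) : R :=
  \sum_(0 <= k < n) phi (iter k theta x).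

(* N_t^phi(x) = min { n : S_n phi x > t } (0 if no such n; never happens for a ceiling function) *)
Definition Nt theta phi (t : R) (x : X) : nat :=
  match pselect (exists n, t < Ssum theta phi n x) with
  | left h => ex_minn h
  | right _ => 0%N
  end.

Definition Xbar phi : set (X * R) := [set p | 0 <= p.2 < phi p.1].

Definition Phi theta phi (t : R) (p : X * R) : X * R :=
  let x := p.1 in let s := p.2 in
  if t < phi x - s then (x, s + t)
  else let N := Nt theta phi (s + t) x in
       (iter N.-1 theta x, s + t - Ssum theta phi N.-1 x).

Definition flow_preimage theta phi (t : R) (A : set (X * R)) : set (X * R) :=
  Xbar phi `&` (Phi theta phi t @^-1` A).

Definition flow_preimage_upto theta phi (r : R) (A : set (X * R)) :=
  \bigcup_(tau in `[0, r]) flow_preimage theta phi tau A.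

Definition fiber_saturation phi (A : set (X * R)) : set (X * R) :=
  Xbar phi `&` (fst @^-1` (fst @` A)).

Section WithMeasure.
Variable mu : probability X R.

Definition mubar phi (S : set (X * R)) : \bar R :=
  ((product_measure1 mu (@lebesgue_measure R)) (S `&` Xbar phi))%E.

Definition is_hole theta phi (A : set (X * R)) : Prop :=
  [/\ A `<=` Xbar phi, measurable A,
      (product_measure1 mu (@lebesgue_measure R)).-negligible
        (Xbar phi `\` \bigcup_(t in [set t : R | 0 <= t]) flow_preimage theta phi t A)
    & forall tau : R, 0 <= tau -> measurable (flow_preimage_upto theta phi tau A)].

Definition survivor theta phi (A : set (X * R)) (t : R) : set (X * R) :=
  [set p | Xbar phi p /\ forall tau, 0 <= tau <= t -> ~ A (Phi theta phi tau p)].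

Definition elog (x : \bar R) : \bar R :=
  match x with
  | EFin r => if r == 0%R then -oo else (ln r)%:E
  | +oo => +oo
  | -oo => -oo
  end%E.

Definition escape_fun theta phi (A : set (X * R)) (t : R) : \bar R :=
  (- (t^-1)%:E * elog (mubar phi (survivor theta phi A t)))%E.

Definition upper_escape_rate theta phi A : \bar R :=
  limf_esup (escape_fun theta phi A) +oo.
Definition lower_escape_rate theta phi A : \bar R :=
  limf_einf (escape_fun theta phi A) +oo.

Definition escape_rate_exists theta phi A : Prop :=
  upper_escape_rate theta phi A = lower_escape_rate theta phi A.
(* when it exists, the escape rate is the common value *)
Definition escape_rate theta phi A : \bar R := upper_escape_rate theta phi A.

End WithMeasure.
End SpecialFlow.

(* Main.v *)
From HB Require Import structures.
From mathcomp Require Import all_boot all_order all_algebra.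
From mathcomp Require Import all_classical all_reals all_analysis.
From mathcomp Require Import ring lra.
From mathcomp Require Import measurable_realfun.
Require Import Defs.
Set Implicit Arguments. Unset Strict Implicit. Unset Printing Implicit Defensive.
Import Order.TTheory GRing.Theory Num.Theory.
Import numFieldNormedType.Exports.
Local Open Scope classical_set_scope.
Local Open Scope ring_scope.
Section Flow.
Context {R : realType} {d : measure_display} {X : measurableType d}.
Variables (theta : X -> X) (phi : X -> R).
Hypothesis Hphi : ceiling_function phi.

Definition cst_c := inf (range phi).

Lemma c_gt0 : 0 < cst_c. Proof. exact: Hphi.2. Qed.

Lemma phi_ge_c x : cst_c <= phi x.
Proof.
have [hl|hl] := pselect (has_lbound (range phi)).
  by apply: ge_inf => //; exists x.
have := c_gt0; rewrite /cst_c inf_out ?ltxx// => -[_ h]; exact: hl.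
Qed.

Lemma phi_gt0 x : 0 < phi x.
Proof. exact: lt_le_trans c_gt0 (phi_ge_c x). Qed.

Local Notation S := (Ssum theta phi).

Lemma S0 x : S 0 x = 0. Proof. by rewrite /Ssum big_geq. Qed.

Lemma SS n x : S n.+1 x = S n x + phi (iter n theta x).
Proof. by rewrite /Ssum big_nat_recr. Qed.

Lemma S1 x : S 1 x = phi x.
Proof. by rewrite SS S0 add0r. Qed.

Lemma S_ge n x : n%:R * cst_c <= S n x.
Proof.
elim: n => [|n IH]; first by rewrite S0 mul0r.
by rewrite SS -natr1 mulrDl mul1r lerD// phi_ge_c.
Qed.

Lemma S_le m n x : (m <= n)%N -> S m x <= S n x.
Proof.
elim: n => [|n IH]; first by rewrite leqn0 => /eqP ->.
rewrite leq_eqVlt => /orP[/eqP -> //|]; rewrite ltnS => /IH h.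
by rewrite SS (le_trans h)// lerDl ltW// phi_gt0.
Qed.

Lemma S_lt m n x : (m < n)%N -> S m x < S n x.
Proof.
move=> h; apply: (lt_le_trans _ (S_le x h)); rewrite SS ltrDl; exact: phi_gt0.
Qed.

Lemma S_cocycle n m x : S (n + m) x = S n x + S m (iter n theta x).
Proof.
elim: m => [|m IH]; first by rewrite addn0 S0 addr0.
by rewrite addnS !SS IH addrA -iterD addnC.
Qed.

Lemma S_unbounded u x : exists n, u < S n x.
Proof.
exists (Num.truncn (u / cst_c)).+1.
apply: (lt_le_trans _ (S_ge _ _)).
by rewrite -ltr_pdivrMr ?c_gt0// truncnS_gt.
Qed.

Lemma S_bracket u x : 0 <= u -> exists n, S n x <= u < S n.+1 x.
Proof.
move=> u0; have h := S_unbounded u x.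
case: (ex_minnP h) => m hm hmin.
case: m hm hmin => [|n] hm hmin; first by rewrite S0 ltNge u0 in hm.
exists n; rewrite hm andbT leNgt; apply/negP => /hmin; rewrite ltnn //.
Qed.

Lemma Phi_char t p n : 0 <= p.2 -> 0 <= t -> S n p.1 <= p.2 + t < S n.+1 p.1 ->
  Phi theta phi t p = (iter n theta p.1, p.2 + t - S n p.1).
Proof.
case: p => x s /= hs ht /andP[h1 h2].
rewrite /Phi /=.
case: ifPn => htl.
  have n0 : n = 0%N.
    case: n h1 h2 => // n h1 _; exfalso.
    have := S_le x (isT : (1 <= n.+1)%N); rewrite S1 => h3.
    by move: htl; rewrite ltrBrDl => /(le_lt_trans h1) /(le_lt_trans h3); rewrite ltxx.
  by rewrite n0 S0 subr0.
rewrite /Nt; case: pselect => [h|nh]; last by exfalso; apply: nh; exists n.+1.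
case: ex_minnP => m hm hmin.
have -> : m = n.+1; last by [].
apply/eqP; rewrite eqn_leq hmin//= ltnNge; apply/negP => hmn.
by have := le_lt_trans (S_le x hmn) (le_lt_trans h1 hm); rewrite ltxx.
Qed.

Lemma Phi_bracket t p : 0 <= p.2 -> 0 <= t -> exists n,
  S n p.1 <= p.2 + t < S n.+1 p.1 /\
  Phi theta phi t p = (iter n theta p.1, p.2 + t - S n p.1).
Proof.
move=> hs ht; have [n hn] := S_bracket p.1 (addr_ge0 hs ht).
by exists n; split => //; exact: Phi_char.
Qed.

Lemma Phi_Xbar t p : Xbar phi p -> 0 <= t -> Xbar phi (Phi theta phi t p).
Proof.
move=> /andP[hs hp] ht; have [n [/andP[h1 h2] ->]] := Phi_bracket hs ht.
rewrite /Xbar /= subr_ge0 h1 /= ltrBlDl.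
by rewrite -[n.+1]addn1 S_cocycle S1 in h2.
Qed.

Lemma Phi_comp a b p : Xbar phi p -> 0 <= a -> 0 <= b ->
  Phi theta phi a (Phi theta phi b p) = Phi theta phi (b + a) p.
Proof.
move=> hp ha hb; have := hp => /andP[hs _].
have [n [/andP[h1 h2] ->]] := Phi_bracket hs hb.
have hs' : 0 <= (iter n theta p.1, p.2 + b - S n p.1).2 by rewrite /= subr_ge0.
have [m [/andP[h3 h4] ->]] := Phi_bracket hs' ha.
rewrite /= in h3 h4 *.
have e : S (n + m) p.1 <= p.2 + (b + a) < S (n + m).+1 p.1.
  by rewrite -addnS !S_cocycle; apply/andP; split; lra.
rewrite (Phi_char hs (addr_ge0 hb ha) e) -iterD addnC; congr pair.
rewrite S_cocycle; lra.
Qed.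

Lemma Phi0 p : Xbar phi p -> Phi theta phi 0 p = p.
Proof.
case: p => x s /andP[/= hs hp]; rewrite (@Phi_char 0 (x, s) 0)//=.
  by rewrite S0 addr0 subr0.
by rewrite S0 S1 addr0 hs.
Qed.

End Flow.
Section SetLemmas.
Context {R : realType} {d : measure_display} {X : measurableType d}.
Variables (theta : X -> X) (phi : X -> R).
Hypothesis Hphi : ceiling_function phi.
Local Notation S := (Ssum theta phi).
Local Notation Ph := (Phi theta phi).
Local Notation Phi0' := (Phi0 theta Hphi).
Local Notation Phi_comp' := (Phi_comp theta Hphi).
Local Notation Phi_Xbar' := (Phi_Xbar theta Hphi).
Local Notation Phi_bracket' := (Phi_bracket theta Hphi).
Local Notation S_le' := (S_le theta Hphi).
Local Notation S_lt' := (S_lt theta Hphi).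
Local Notation Phi_char' := (@Phi_char _ _ _ theta phi Hphi).

Lemma surv_mono_t A t t' : t <= t' -> survivor theta phi A t' `<=` survivor theta phi A t.
Proof.
move=> tt p [hp h]; split => // tau /andP[h0 h1]; apply: h.
by rewrite h0 (le_trans h1 tt).
Qed.

Lemma surv_mono_A A B t : A `<=` B -> survivor theta phi B t `<=` survivor theta phi A t.
Proof. by move=> AB p [hp h]; split => // tau htau /AB; exact: h. Qed.

Lemma surv_upto A r t : 0 <= r -> 0 <= t ->
  survivor theta phi (flow_preimage_upto theta phi r A) t = survivor theta phi A (t + r).
Proof.
move=> r0 t0; apply/seteqP; split => p [hp h]; split => // tau /andP[h0 h1].
  move=> hA.
  have [tt|tt] := leP tau t.
    apply: (h tau); first by rewrite h0 tt.
    exists 0; first by rewrite /= in_itv /= lexx r0.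
    by split; [exact: Phi_Xbar'|rewrite /= Phi0' //; exact: Phi_Xbar'].
  apply: (h t); first by rewrite t0 lexx.
  exists (tau - t); first by rewrite /= in_itv /= subr_ge0 (ltW tt) lerBlDl.
  split; first exact: Phi_Xbar'.
  by rewrite /preimage /= Phi_comp' // ?subr_ge0 ?(ltW tt)// addrC subrK.
move=> [sigma]; rewrite /= in_itv /= => /andP[s0 s1] [_].
rewrite /preimage /= Phi_comp' // => hA; apply: (h (tau + sigma)) => //.
by rewrite addr_ge0 //= lerD.
Qed.

Lemma surv_pre A r t : 0 <= r ->
  survivor theta phi (flow_preimage theta phi r A) t =
  Xbar phi `&` (Ph r @^-1` survivor theta phi A t).
Proof.
move=> r0; apply/seteqP; split.
  move=> p [hp h]; split => //; split; first exact: Phi_Xbar'.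
  move=> tau /andP[h0 h1]; rewrite /preimage /= Phi_comp' // => hA.
  apply: (h tau); first by rewrite h0.
  split; first exact: Phi_Xbar'.
  by rewrite /preimage /= Phi_comp' // addrC.
move=> p [hp [_ h]]; split => // tau /andP[h0 h1] [_].
rewrite /preimage /= Phi_comp' // addrC -Phi_comp' //; apply: h; by rewrite h0.
Qed.

Lemma sub_fiber A : A `<=` Xbar phi -> A `<=` fiber_saturation phi A.
Proof. by move=> AX p Ap; split; [exact: AX|exists p]. Qed.

Lemma surv_fiber_sub A M t : A `<=` Xbar phi -> (forall x, phi x <= M) -> 0 <= t ->
  survivor theta phi A (t + 2 * M) `<=`
  Xbar phi `&` (Ph M @^-1` survivor theta phi (fiber_saturation phi A) t).
Proof.
move=> AX hM t0 q [hq h].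
have M0 : 0 <= M by apply: le_trans (hM q.1); exact/ltW/phi_gt0.
split => //; split; first exact: Phi_Xbar'.
move=> tau /andP[h0 h1] [_ [a Aa ea]].
move: ea; rewrite Phi_comp' // => ea.
have := hq => /andP[hs hqp].
have [k [/andP[k1 k2] ek]] := Phi_bracket' hs (addr_ge0 M0 h0).
rewrite ek /= in ea.
have k0 : (0 < k)%N.
  case: k k1 k2 ek ea => // k1 k2 _ _; exfalso.
  move: k2; rewrite (S1 theta) => k2; have := hM q.1; lra.
have := AX _ Aa => /andP[a0 a1].
rewrite ea in a1.
have Sk1 : phi q.1 <= S k q.1 by rewrite -(S1 theta); exact: S_le'.
have hsig : Ph (S k q.1 + a.2 - q.2) q = a.
  rewrite (Phi_char' (t:=S k q.1 + a.2 - q.2) (p:=q) (n:=k)) //.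
  - move: ea; case: a {Aa a0 a1} => ? ? /= ->; congr pair; lra.
  - lra.
  - rewrite -addn1 (S_cocycle theta) (S1 theta); apply/andP; split; lra.
apply: (h (S k q.1 + a.2 - q.2)); last by rewrite hsig.
have := hM (iter k theta q.1) => hMk.
apply/andP; split; lra.
Qed.

Lemma surv_fiberE A t : 0 <= t ->
  survivor theta phi (fiber_saturation phi A) t =
  Xbar phi `\` \bigcup_n ([set p | S n p.1 - p.2 <= t] `&` [set p | (fst @` A) (iter n theta p.1)]).
Proof.
move=> t0; apply/seteqP; split.
  move=> p [hp h]; split => // -[n _ [hn hA]].
  have := hp => /andP[hs hpp].
  case: n hn hA => [|n] hn hA.
    apply: (h 0); first by rewrite lexx t0.
    by rewrite Phi0' //; split.
  apply: (h (S n.+1 p.1 - p.2)).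
    apply/andP; split => //; rewrite subr_ge0; apply: le_trans (ltW hpp) _.
    by rewrite -(S1 theta); exact: S_le'.
  have hS : S n.+1 p.1 - p.2 >= 0.
    rewrite subr_ge0; apply: le_trans (ltW hpp) _; rewrite -(S1 theta); exact: S_le'.
  rewrite (Phi_char' (p:=p) (n:=n.+1)) //.
    split; last exact: hA.
    have := phi_gt0 Hphi (iter n.+1 theta p.1) => hg.
    by rewrite /Xbar /=; apply/andP; split; lra.
  rewrite addrC subrK lexx /=; exact: S_lt'.
move=> p [hp hn]; split => // tau /andP[h0 h1] [_ hA].
have := hp => /andP[hs hpp].
have [k [/andP[k1 k2] ek]] := Phi_bracket' hs h0.
apply: hn; exists k => //; split; last by rewrite ek in hA.
rewrite /=; lra.
Qed.

End SetLemmas.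
Section Limits.
Context {R : realType}.
Local Open Scope ereal_scope.

Lemma le_of_forall_gt (x y : \bar R) :
  (forall z : R, y < z%:E -> x <= z%:E) -> x <= y.
Proof.
case: y => [r| |] h.
- case: x h => [x| |] h.
  + rewrite lee_fin leNgt; apply/negP => hx.
    have := h ((r + x) / 2)%R; rewrite !lte_fin !lee_fin => h'.
    have : (r < (r + x) / 2)%R by lra.
    move/h'; lra.
  + have : (r < r + 1)%R by lra.
    by rewrite -lte_fin => /h; rewrite leNgt ltry.
  + by rewrite leNye.
- by rewrite leey.
- case: x h => [x| |] h.
  + have := h (x - 1)%R (ltNyr _); rewrite lee_fin => hh; exfalso; lra.
  + by have := h 0%R (ltNyr _); rewrite leNgt ltry.
  + by [].
Qed.

Lemma esup_le_of (f : R -> \bar R) (y : \bar R) :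
  (forall z : R, y < z%:E -> \forall t \near +oo%R, f t <= z%:E) ->
  limf_esup f +oo%R <= y.
Proof.
move=> h; apply: le_of_forall_gt => z /h hz.
rewrite limf_esupE.
apply: le_trans (ereal_inf_lbound _) _.
  by exists [set t | f t <= z%:E] => //.
apply: ge_ereal_sup => _ [t ht <-]; exact: ht.
Qed.

Lemma esup_lt_near (f : R -> \bar R) (z : R) :
  limf_esup f +oo%R < z%:E -> \forall t \near +oo%R, f t < z%:E.
Proof.
rewrite limf_esupE => /ereal_inf_lt [_ [V hV <-] hlt].
apply: filterS hV => t Vt; apply: le_lt_trans hlt.
by apply: ereal_sup_ubound; exists t.
Qed.

Lemma esup_le (f g : R -> \bar R) :
  (\forall t \near +oo%R, f t <= g t) -> limf_esup f +oo%R <= limf_esup g +oo%R.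
Proof.
move=> H; apply: esup_le_of => z /esup_lt_near hz.
by apply: filterS2 H hz => t h1 h2; exact: le_trans h1 (ltW h2).
Qed.

Lemma near_shift_pinfty (P : R -> Prop) (a : R) : (0 <= a)%R ->
  (\forall s \near +oo%R, P s) -> \forall t \near +oo%R, P (t + a)%R.
Proof.
move=> a0 [M [Mr hM]]; exists M; split => // t ht; apply: hM.
by apply: lt_le_trans ht _; rewrite lerDl.
Qed.

Lemma shift_pointwise (t a z' z : R) (E : \bar R) : (0 < t)%R -> (0 <= a)%R ->
  (z' * (t + a) <= z * t)%R ->
  - ((t + a)^-1)%:E * E < z'%:E -> - (t^-1)%:E * E <= z%:E.
Proof.
move=> t0 a0 hz; have ta0 : (0 < t + a)%R by lra.
case: E => [x| |].
- rewrite -!EFinM !lte_fin !lee_fin => h.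
  have ex : x = (((t + a)^-1 * x) * (t + a))%R.
    by rewrite mulrAC mulVf ?mul1r // gt_eqF.
  move: h ex; rewrite mulNr; set y := ((t + a)^-1 * x)%R => h ex.
  rewrite mulNr mulrC -mulNr ler_pdivrMr //.
  rewrite ex; clearbody y; nra.
- move=> _; rewrite mulNe gt0_muley; first by rewrite /= leNye.
  by rewrite lte_fin invr_gt0.
- rewrite mulNe gt0_muleNy /=; first by rewrite ltNge leey.
  by rewrite lte_fin invr_gt0.
Qed.

Lemma exists_between (l : \bar R) (z : R) : l < z%:E ->
  exists z' : R, l < z'%:E /\ (z' < z)%R.
Proof.
case: l => [r| |] //.
- rewrite lte_fin => rz; exists ((r + z) / 2)%R; rewrite lte_fin; split; lra.
- by move=> _; exists (z - 1)%R; rewrite ltNyr; split => //; lra.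
Qed.

Lemma esup_shift_le (e g : R -> \bar R) (a : R) : (0 <= a)%R ->
  (\forall t \near +oo%R, g t <= - (t^-1)%:E * e (t + a)%R) ->
  limf_esup g +oo%R <= limf_esup (fun t : R => - (t^-1)%:E * e t) +oo%R.
Proof.
move=> a0 H.
apply: esup_le_of => z hz.
have [z' [Lz' z'z]] := exists_between hz.
have h1 := near_shift_pinfty a0 (esup_lt_near Lz').
have h2 : \forall t \near +oo%R, (0 < t)%R /\ (z' * (t + a) <= z * t)%R.
  have [z'0|z'0] := leP 0%R z'.
    apply: filterS (nbhs_pinfty_gt (r := (z' * a / (z - z'))%R) _) => [t ht|]; last by rewrite num_real.
    have zz : (0 < z - z')%R by lra.
    have t0 : (0 < t)%R.
      by apply: le_lt_trans ht; apply: divr_ge0; [exact: mulr_ge0|lra].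
    split => //.
    move: ht; rewrite ltr_pdivrMr // => ht; lra.
  apply: filterS (nbhs_pinfty_gt (r := 0%R) _) => [t ht|]; last by rewrite num_real.
  split => //; nra.
apply: filterS3 H h1 h2 => t hg hf [t0 ht].
apply: le_trans hg _; exact: shift_pointwise t0 a0 ht hf.
Qed.

End Limits.
Section Shift.
Context {R : realType}.
Variable b : R.
Local Notation RT := (measurableTypeR R).
Definition shiftm : set RT -> \bar R :=
  fun A => lebesgue_measure ((fun s : RT => (s : R) + b : RT) @^-1` A).
Let mf : measurable_fun (setT : set RT) (fun s : RT => (s : R) + b : RT).
Proof.
have h : measurable_fun (setT : set R) (fun s : R => s + b).
  by apply: measurable_realfun.measurable_funD => //; exact: measurable_cst.
exact: h.
Qed.
Let shiftm0 : shiftm set0 = 0%E.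
Proof. by rewrite /shiftm preimage_set0 measure0. Qed.
Let shiftm_ge0 A : (0 <= shiftm A)%E.
Proof. exact: measure_ge0. Qed.
Let shiftm_sigma_additive : semi_sigma_additive shiftm.
Proof.
move=> F mF tF mUF; rewrite /shiftm preimage_bigcup.
apply: measure_semi_sigma_additive.
- by move=> n; rewrite -[X in measurable X]setTI; exact: mf.
- apply/trivIsetP => /= i j _ _ ij; rewrite -preimage_setI.
  by move/trivIsetP : tF => /(_ _ _ _ _ ij) ->//; rewrite preimage_set0.
- by rewrite -preimage_bigcup -[X in measurable X]setTI; exact: mf.
Qed.
HB.instance Definition _ := isMeasure.Build _ _ _
  shiftm shiftm0 shiftm_ge0 shiftm_sigma_additive.

Lemma shift_invariant (A : set R) : measurable A ->
  lebesgue_measure ((fun s : R => s + b) @^-1` A) = lebesgue_measure A.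
Proof.
move=> mA; apply/esym; rewrite -/(shiftm A).
apply: (lebesgue_measure_unique (mu := shiftm)) => // _ [[x1 x2] _ <-].
rewrite /shiftm /=.
transitivity (lebesgue_measure (`](x1 - b), (x2 - b)]%classic : set RT)); last first.
  congr lebesgue_measure.
  apply/seteqP; split => s; rewrite /= !in_itv /= => /andP[h1 h2]; apply/andP; split; lra.
rewrite !lebesgue_measure_itv /= !lte_fin ltrD2r.
by case: ifP => // _; rewrite -!EFinD; congr EFin; lra.
Qed.
End Shift.
Section Invariance.
Context {R : realType} {d : measure_display} {X : measurableType d}.
Variables (mu : probability X R) (theta : X -> X) (phi : X -> R).
Hypothesis Htheta : measure_preserving mu theta.
Hypothesis Hphi : ceiling_function phi.
Local Notation S := (Ssum theta phi).
Local Notation Ph := (Phi theta phi).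
Local Notation m := (product_measure1 mu (@lebesgue_measure R)).
Local Notation c := (cst_c phi).

Let mth : measurable_fun setT theta := Htheta.1.
Let mphi : measurable_fun setT phi := Hphi.1.

Lemma mset_lt (f g : X * R -> R) : measurable_fun setT f -> measurable_fun setT g ->
  measurable [set p | f p < g p].
Proof.
move=> mf mg; rewrite -[X in measurable X]setTI.
exact: (measurable_realfun.measurable_fun_ltr mf mg) measurableT [set true] _.
Qed.

Lemma mset_le (f g : X * R -> R) : measurable_fun setT f -> measurable_fun setT g ->
  measurable [set p | f p <= g p].
Proof.
move=> mf mg; have -> : [set p | f p <= g p] = ~` [set p | g p < f p].
  by apply/seteqP; split => p /=; rewrite leNgt; case: (g p < f p) => // h; apply: h.
exact: measurableC (mset_lt mg mf).
Qed.

Lemma mfst_phi : measurable_fun setT (fun p : X * R => phi p.1).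
Proof. exact: measurableT_comp mphi measurable_fst. Qed.

Lemma msnd_add (r : R) : measurable_fun setT (fun p : X * R => p.2 + r).
Proof.
by apply: measurable_realfun.measurable_funD; [exact: measurable_snd|exact: measurable_cst].
Qed.

Lemma mXbar : measurable (Xbar phi).
Proof.
have -> : Xbar phi = [set p | (fun=> 0) p <= p.2] `&` [set p | p.2 < phi p.1].
  apply/seteqP; split => p; rewrite /Xbar /=.
    by move=> /andP[h1 h2]; split.
  by move=> [h1 h2]; apply/andP; split.
apply: measurableI; (apply: mset_le || apply: mset_lt);
  solve [exact: measurable_cst|exact: measurable_snd|exact: mfst_phi].
Qed.

Definition pth : set X -> \bar R := fun A => mu (theta @^-1` A).
Let pth0 : pth set0 = 0%E.
Proof. by rewrite /pth preimage_set0 measure0. Qed.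
Let pth_ge0 A : (0 <= pth A)%E.
Proof. exact: measure_ge0. Qed.
Let pth_sigma_additive : semi_sigma_additive pth.
Proof.
move=> F mF tF mUF; rewrite /pth preimage_bigcup.
apply: measure_semi_sigma_additive.
- by move=> n; rewrite -[X in measurable X]setTI; exact: mth.
- apply/trivIsetP => /= i j _ _ ij; rewrite -preimage_setI.
  by move/trivIsetP : tF => /(_ _ _ _ _ ij) ->//; rewrite preimage_set0.
- by rewrite -preimage_bigcup -[X in measurable X]setTI; exact: mth.
Qed.
HB.instance Definition _ := isMeasure.Build _ _ _ pth pth0 pth_ge0 pth_sigma_additive.

Lemma integral_theta (h : X -> \bar R) : measurable_fun setT h -> (forall x, 0 <= h x)%E ->
  (\int[mu]_x h (theta x) = \int[mu]_x h x)%E.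
Proof.
move=> mh h0.
have := ge0_integral_pushforward mth mu (D := setT) measurableT mh (fun y _ => h0 y).
rewrite preimage_setT => <-.
change (\int[pth]_(y in setT) h y = \int[mu]_x h x)%E.
apply: eq_measure_integral => A mA _; exact: Htheta.2.
Qed.

End Invariance.
Section Invariance2.
Context {R : realType} {d : measure_display} {X : measurableType d}.
Variables (mu : probability X R) (theta : X -> X) (phi : X -> R).
Hypothesis Htheta : measure_preserving mu theta.
Hypothesis Hphi : ceiling_function phi.
Local Notation Ph := (Phi theta phi).
Local Notation m := (product_measure1 mu (@lebesgue_measure R)).
Local Notation c := (cst_c phi).

Let mth : measurable_fun setT theta := Htheta.1.
Let mphi : measurable_fun setT phi := Hphi.1.

Lemma Phi_small r p : 0 <= r -> r < c -> Xbar phi p ->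
  Ph r p = if p.2 + r < phi p.1 then (p.1, p.2 + r) else (theta p.1, p.2 + r - phi p.1).
Proof.
move=> r0 rc hp; have := hp => /andP[hs hpp]; case: ifPn => h.
  rewrite (Phi_char Hphi (n:=0)) //=; first by rewrite (S0 theta) subr0.
  by rewrite (S0 theta) (S1 theta) h andbT addr_ge0.
rewrite (Phi_char Hphi (n:=1)) //; first by rewrite (S1 theta).
move: h; rewrite -leNgt => h.
have := phi_ge_c Hphi (theta p.1) => hc.
rewrite (SS theta phi 1) (S1 theta) /= h /=; lra.
Qed.

Lemma inv_small r (A : set (X * R)) : 0 <= r -> r < c -> measurable A ->
  measurable (Xbar phi `&` Ph r @^-1` A) /\
  m (Xbar phi `&` Ph r @^-1` A) = m (A `&` Xbar phi).
Proof.
move=> r0 rc mA.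
have c_phi x : c <= phi x := phi_ge_c Hphi x.
pose g1 := fun p : X * R => (p.1, p.2 + r).
pose g2 := fun p : X * R => (theta p.1, p.2 + r - phi p.1).
have mg1 : measurable_fun setT g1.
  by apply: measurable_fun_pair; [exact: measurable_fst|exact: msnd_add].
have mg2 : measurable_fun setT g2.
  apply: measurable_fun_pair; first exact: measurableT_comp mth measurable_fst.
  exact: measurable_funB (msnd_add r) (mfst_phi Hphi).
have mpre (g : X * R -> X * R) : measurable_fun setT g -> measurable (g @^-1` A).
  by move=> mg; rewrite -[X in measurable X]setTI; exact: mg measurableT A mA.
pose Q1 := [set p : X * R | p.2 + r < phi p.1] `&` (Xbar phi `&` g1 @^-1` A).
pose Q2 := [set p : X * R | phi p.1 <= p.2 + r] `&` (Xbar phi `&` g2 @^-1` A).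
have mQ1 : measurable Q1.
  apply: measurableI; first exact: mset_lt (msnd_add r) (mfst_phi Hphi).
  exact: measurableI (mXbar Hphi) (mpre _ mg1).
have mQ2 : measurable Q2.
  apply: measurableI; first exact: mset_le (mfst_phi Hphi) (msnd_add r).
  exact: measurableI (mXbar Hphi) (mpre _ mg2).
have QE : Xbar phi `&` Ph r @^-1` A = Q1 `|` Q2.
  apply/seteqP; split => p.
    move=> [hp]; rewrite /preimage /= (Phi_small r0 rc hp).
    case: ifPn => h hA.
      by left; rewrite /Q1; split => //; split.
    by right; rewrite /Q2; split; [rewrite /= leNgt|split].
  move=> [|]; [rewrite /Q1|rewrite /Q2]; move=> [h [hp hA]]; split => //; rewrite /preimage /= (Phi_small r0 rc hp).
    by rewrite h.
  by rewrite ltNge h.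
split; first by rewrite QE; exact: measurableU.
pose A1 := A `&` ([set p : X * R | r <= p.2] `&` [set p | p.2 < phi p.1]).
pose A2 := A `&` ([set p : X * R | 0 <= p.2] `&` [set p | p.2 < r]).
have mA1 : measurable A1.
  apply: measurableI => //; apply: measurableI.
    by apply: (mset_le (f := fun=> r)); [exact: measurable_cst|exact: measurable_snd].
  by apply: mset_lt (mfst_phi Hphi); exact: measurable_snd.
have mA2 : measurable A2.
  apply: measurableI => //; apply: measurableI.
    by apply: (mset_le (f := fun=> 0)); [exact: measurable_cst|exact: measurable_snd].
  by apply: (mset_lt (g := fun=> r)); [exact: measurable_snd|exact: measurable_cst].
pose h1 := fun x => lebesgue_measure (xsection A1 x).
pose h2 := fun x => lebesgue_measure (xsection A2 x).
have mh1 : measurable_fun setT h1 := measurable_fun_xsection lebesgue_measure mA1.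
have mh2 : measurable_fun setT h2 := measurable_fun_xsection lebesgue_measure mA2.
have sec_l x : lebesgue_measure (xsection (Q1 `|` Q2) x) = (h1 x + h2 (theta x))%E.
  have e1 : xsection Q1 x = (fun s => s + r) @^-1` xsection A1 x.
    apply/seteqP; split => s; rewrite /xsection /Q1 /A1 /g1 /preimage /= !in_setE /= /Xbar /=.
      by move=> [h [/andP[h3 h4] hA]]; split => //; split; lra.
    move=> [hA [h3 h4]]; split => //; split => //.
    by rewrite /Xbar /=; apply/andP; split; lra.
  have e2 : xsection Q2 x = (fun s => s + (r - phi x)) @^-1` xsection A2 (theta x).
    apply/seteqP; split => s; rewrite /xsection /Q2 /A2 /g2 /preimage /= !in_setE /= /Xbar /=.
      move=> [h [/andP[h3 h4] hA]]; split; first by rewrite addrA.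
      by split; lra.
    move=> [hA [h3 h4]]; split; first lra.
    split; last by rewrite -addrA.
    have := c_phi x => hcx.
    by rewrite /Xbar /=; apply/andP; split; lra.
  have eU : xsection (Q1 `|` Q2) x = xsection Q1 x `|` xsection Q2 x.
    by apply/seteqP; split => s; rewrite /xsection /= !in_setE.
  rewrite eU measureU; first last.
  - apply/seteqP; split => // s; rewrite /xsection /Q1 /Q2 /= !in_setE /=.
    by move=> [[h1' _] [h2' _]]; lra.
  - exact: measurable_xsection.
  - exact: measurable_xsection.
  rewrite e1 e2; congr (_ + _)%E; apply: shift_invariant; exact: measurable_xsection.
have sec_r x : lebesgue_measure (xsection (A `&` Xbar phi) x) = (h2 x + h1 x)%E.
  have eU : xsection (A `&` Xbar phi) x = xsection A2 x `|` xsection A1 x.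
    have := c_phi x => hcx.
    apply/seteqP; split => s; rewrite /xsection /A1 /A2 /= !in_setE /= /Xbar /=.
      move=> [hA /andP[h3 h4]]; have [hr|hr] := ltP s r; [left|right]; split => //; split => //.
    move=> [[hA [h3 h4]]|[hA [h3 h4]]]; split => //; apply/andP; split; lra.
  rewrite eU measureU; first last.
  - apply/seteqP; split => // s; rewrite /xsection /A1 /A2 /= !in_setE /=.
    by move=> [[_ [_ h1']] [_ [h2' _]]]; lra.
  - exact: measurable_xsection.
  - exact: measurable_xsection.
  by [].
rewrite QE /product_measure1 /=.
transitivity (\int[mu]_x (h1 x + h2 (theta x)))%E.
  by apply: eq_integral => x _; exact: sec_l.
transitivity (\int[mu]_x (h2 x + h1 x))%E; last first.
  by apply: eq_integral => x _; rewrite sec_r.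
rewrite (ge0_integralD mu measurableT (fun x _ => measure_ge0 _ _) mh1
  (fun x _ => measure_ge0 _ _) (measurableT_comp mh2 mth)).
rewrite (ge0_integralD mu measurableT (fun x _ => measure_ge0 _ _) mh2
  (fun x _ => measure_ge0 _ _) mh1).
rewrite [RHS]addeC; congr (_ + _)%E.
exact: (integral_theta Htheta mh2 (fun x => measure_ge0 _ _)).
Qed.

End Invariance2.
Section Invariance3.
Context {R : realType} {d : measure_display} {X : measurableType d}.
Variables (mu : probability X R) (theta : X -> X) (phi : X -> R).
Hypothesis Htheta : measure_preserving mu theta.
Hypothesis Hphi : ceiling_function phi.
Local Notation Ph := (Phi theta phi).
Local Notation m := (product_measure1 mu (@lebesgue_measure R)).
Local Notation c := (cst_c phi).

Let mth : measurable_fun setT theta := Htheta.1.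
Let mphi : measurable_fun setT phi := Hphi.1.

Lemma inv_all r (A : set (X * R)) : 0 <= r -> measurable A ->
  measurable (Xbar phi `&` Ph r @^-1` A) /\
  m (Xbar phi `&` Ph r @^-1` A) = m (A `&` Xbar phi).
Proof.
have c0 := c_gt0 Hphi.
pose del := c / 2.
have del0 : 0 < del by rewrite /del; lra.
have delc : del < c by rewrite /del; lra.
clearbody del.
suff H : forall n r A, 0 <= r <= n%:R * del -> measurable A ->
    measurable (Xbar phi `&` Ph r @^-1` A) /\
    m (Xbar phi `&` Ph r @^-1` A) = m (A `&` Xbar phi).
  move=> r0 mA; apply: (H (Num.truncn (r / del)).+1) => //.
  rewrite r0 /= -ler_pdivrMr //; exact/ltW/truncnS_gt.
clear r A.
elim => [|n IH] r A /andP[r0 rn] mA.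
  have -> : r = 0 by move: rn; rewrite mul0r => rn; lra.
  have -> : Xbar phi `&` Ph 0 @^-1` A = A `&` Xbar phi.
    rewrite setIC; apply/seteqP; split => p [h1 h2]; split => //.
      by move: h1; rewrite /preimage /= Phi0.
    by rewrite /preimage /= Phi0.
  split => //; exact: measurableI mA (mXbar Hphi).
have [a [b [a0 [ad [b0 [bn eab]]]]]] : exists a b, 0 <= a /\ a <= del /\ 0 <= b /\
    b <= n%:R * del /\ r = a + b.
  have [rd|rd] := leP r del.
    exists r, 0; do ! split => //; rewrite ?addr0 //.
    by apply: mulr_ge0 => //; exact: ltW.
  exists del, (r - del); do ! split => //; try lra.
have bb : 0 <= b <= n%:R * del by rewrite b0 bn.
have [mB eB] := IH b A bb mA.
have E : Xbar phi `&` Ph r @^-1` A = Xbar phi `&` Ph a @^-1` (Xbar phi `&` Ph b @^-1` A).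
  apply/seteqP; split => p [hp h]; split => //; move: h; rewrite /preimage /=.
    move=> h; split; first exact: Phi_Xbar.
    by rewrite Phi_comp // -eab.
  by move=> [_]; rewrite Phi_comp // -eab.
have [mC eC] := inv_small Htheta Hphi a0 (le_lt_trans ad delc) mB.
rewrite E; split => //; rewrite eC.
by rewrite setIAC setIid.
Qed.

End Invariance3.
Section SurvMeas.
Context {R : realType} {d : measure_display} {X : measurableType d}.
Variables (mu : probability X R) (theta : X -> X) (phi : X -> R).
Hypothesis Htheta : measure_preserving mu theta.
Hypothesis Hphi : ceiling_function phi.
Local Notation Ph := (Phi theta phi).
Local Notation S := (Ssum theta phi).

Let mth : measurable_fun setT theta := Htheta.1.
Let mphi : measurable_fun setT phi := Hphi.1.

Lemma miter n : measurable_fun setT (iter n theta).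
Proof.
elim: n => [|n IH]; first exact: measurable_id.
exact: measurableT_comp mth IH.
Qed.

Lemma mS n : measurable_fun setT (S n).
Proof.
elim: n => [|n IH].
  have -> : S 0 = cst 0 by apply/funext => x; rewrite (S0 theta).
  exact: measurable_cst.
have -> : S n.+1 = S n \+ (phi \o iter n theta).
  by apply/funext => x; rewrite (SS theta).
apply: measurable_funD IH _; exact: measurableT_comp mphi (miter n).
Qed.

Lemma surv_upto_eq A t : survivor theta phi A t =
  Xbar phi `\` flow_preimage_upto theta phi t A.
Proof.
apply/seteqP; split => p.
  move=> [hp h]; split => // -[tau]; rewrite /= in_itv /= => ht [_ hA].
  exact: h tau ht hA.
move=> [hp hn]; split => // tau ht hA; apply: hn; exists tau.
  by rewrite /= in_itv.
by split.
Qed.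

Lemma surv_meas_hole A t : is_hole mu theta phi A -> 0 <= t ->
  measurable (survivor theta phi A t).
Proof.
case=> _ _ _ Hup t0; rewrite surv_upto_eq.
exact: measurableD (mXbar Hphi) (Hup t t0).
Qed.

Lemma surv_meas_fiber A t : measurable (fst @` A) -> 0 <= t ->
  measurable (survivor theta phi (fiber_saturation phi A) t).
Proof.
move=> mA t0; rewrite (surv_fiberE theta Hphi) //.
apply: measurableD (mXbar Hphi) _; apply: bigcupT_measurable => n.
apply: measurableI.
  apply: (mset_le (g := fun=> t)); last exact: measurable_cst.
  apply: measurable_funB; last exact: measurable_snd.
  exact: measurableT_comp (mS n) measurable_fst.
have mf : measurable_fun setT (fun p : X * R => iter n theta p.1).
  exact: measurableT_comp (miter n) measurable_fst.
rewrite -[X in measurable X]setTI; exact: mf measurableT _ mA.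
Qed.

End SurvMeas.
Section Final.
Context {R : realType} {d : measure_display} {X : measurableType d}.
Variables (mu : probability X R) (theta : X -> X) (phi : X -> R).
Hypothesis Htheta : measure_preserving mu theta.
Hypothesis Hphi : ceiling_function phi.
Local Notation m := (product_measure1 mu (@lebesgue_measure R)).
Local Open Scope ereal_scope.

Lemma mubar_surv A t : mubar mu phi (survivor theta phi A t) = m (survivor theta phi A t).
Proof. by rewrite /mubar setIidl // => p []. Qed.

Lemma elog_le (u v : \bar R) : 0 <= u -> u <= v -> elog u <= elog v.
Proof.
case: u => [r| |] //; case: v => [s| |] //=; rewrite ?lee_fin => r0 rs.
- case: ifPn => [_|r0']; first by case: ifP; rewrite ?lexx ?leNye.
  have rp : (0 < r)%R by rewrite lt0r r0' r0.
  have sp : (0 < s)%R by exact: lt_le_trans rp rs.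
  rewrite gt_eqF // lee_fin ler_ln //; by rewrite posrE.
- by case: ifP; rewrite ?leey.
Qed.

Lemma escape_le_pt (t : R) (u v : \bar R) : (0 < t)%R -> 0 <= u -> u <= v ->
  - (t^-1)%:E * elog v <= - (t^-1)%:E * elog u.
Proof.
move=> t0 u0 uv; rewrite !mulNe leeN2; apply: lee_wpmul2l.
  by rewrite lee_fin invr_ge0 ltW.
exact: elog_le.
Qed.

Lemma esup_eq_near (f g : R -> \bar R) :
  (\forall t \near +oo%R, f t = g t) -> limf_esup f +oo%R = limf_esup g +oo%R.
Proof.
move=> H; apply: le_anti_ereal; rewrite /le_ereal; apply/andP; split; apply: esup_le;
  by apply: filterS H => t ->.
Qed.

End Final.
Unset Implicit Arguments.
Theorem proposition3p5 (R : realType) (d : measure_display) (X : measurableType d)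
  (mu : probability X R) (theta : X -> X) (phi : X -> R)
  (Htheta : measure_preserving mu theta) (Hphi : ceiling_function phi)
  (A B : set (X * R))
  (HA : is_hole mu theta phi A) (HB : is_hole mu theta phi B) :
  [/\ (A `<=` B ->
        escape_rate_exists mu theta phi A -> escape_rate_exists mu theta phi B ->
        (escape_rate mu theta phi A <= escape_rate mu theta phi B)%E),
      (forall r : R, 0 <= r ->
        escape_rate_exists mu theta phi A ->
        escape_rate_exists mu theta phi (flow_preimage theta phi r A) ->
        escape_rate mu theta phi A = escape_rate mu theta phi (flow_preimage theta phi r A)),
      (forall r : R, 0 <= r ->
        escape_rate_exists mu theta phi A ->
        escape_rate_exists mu theta phi (flow_preimage_upto theta phi r A) ->
        escape_rate mu theta phi A = escape_rate mu theta phi (flow_preimage_upto theta phi r A))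
    & ((exists M : R, forall x, phi x <= M) -> measurable (fst @` A) ->
        escape_rate_exists mu theta phi (fiber_saturation phi A) ->
        escape_rate_exists mu theta phi A ->
        escape_rate mu theta phi (fiber_saturation phi A) = escape_rate mu theta phi A)].
Proof.
have tpos : \forall t \near +oo%R, (0 < t :> R)%R.
  by apply: nbhs_pinfty_gt; rewrite num_real.
have mA t : (0 <= t)%R -> measurable (survivor theta phi A t).
  by move=> t0; have := surv_meas_hole Hphi HA t0.
have AX : A `<=` Xbar phi by case: HA.
rewrite /escape_rate /upper_escape_rate.
split.
- move=> AB _ _; apply: esup_le; apply: filterS tpos => t t0.
  rewrite /escape_fun !mubar_surv; apply: escape_le_pt => //.
  apply: le_measure; rewrite ?inE.
  + by have := surv_meas_hole Hphi HB (ltW t0).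
  + exact: mA (ltW t0).
  + exact: surv_mono_A.
- move=> r r0 _ _; apply: esup_eq_near; apply: filterS tpos => t t0.
  rewrite /escape_fun !mubar_surv (surv_pre theta Hphi) //.
  have [_ ->] := inv_all Htheta Hphi r0 (mA t (ltW t0)).
  by rewrite setIidl // => p [].
- move=> r r0 _ _; apply: le_anti_ereal; rewrite /le_ereal; apply/andP; split.
    apply: esup_le; apply: filterS tpos => t t0.
    rewrite /escape_fun !mubar_surv; apply: escape_le_pt => //.
    rewrite (surv_upto theta Hphi) ?(ltW t0) //.
    apply: le_measure; rewrite ?inE.
    + exact: mA (addr_ge0 (ltW t0) r0).
    + exact: mA (ltW t0).
    + by apply: surv_mono_t; rewrite lerDl.
  apply: (esup_shift_le r0); apply: filterS tpos => t t0.
  by rewrite /escape_fun (surv_upto theta Hphi) ?(ltW t0).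
- move=> [M hM] mfA _ _.
  have M0 : (0 <= M)%R by apply: le_trans (hM point); exact/ltW/(phi_gt0 Hphi).
  have M20 : (0 <= 2 * M)%R by rewrite mulr_ge0.
  apply: le_anti_ereal; rewrite /le_ereal; apply/andP; split.
    apply: (esup_shift_le M20); apply: filterS tpos => t t0.
    rewrite /escape_fun !mubar_surv; apply: escape_le_pt => //.
    have mF := surv_meas_fiber Htheta Hphi mfA (ltW t0).
    have [mC eC] := inv_all Htheta Hphi M0 mF.
    have le1 : (product_measure1 mu (@lebesgue_measure R) (survivor theta phi A (t + 2 * M))
        <= product_measure1 mu (@lebesgue_measure R) (Xbar phi `&` Phi theta phi M @^-1`
        survivor theta phi (fiber_saturation phi A) t))%E.
      apply: le_measure; rewrite ?inE.
      + exact: mA (addr_ge0 (ltW t0) M20).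
      + exact: mC.
      + exact: (surv_fiber_sub (theta := theta) Hphi AX hM (ltW t0)).
    apply: le_trans le1 _.
    by rewrite eC setIidl // => p [].
  apply: esup_le; apply: filterS tpos => t t0.
  rewrite /escape_fun !mubar_surv; apply: escape_le_pt => //.
  apply: le_measure; rewrite ?inE.
  + by have := surv_meas_fiber Htheta Hphi mfA (ltW t0).
  + exact: mA (ltW t0).
  + exact/surv_mono_A/sub_fiber.
Qed.
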